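(* Let $\mathcal{E}$ be the variety of loops described in the context, let $n\ge3$, let $\mathcal{F}_n\in\mathcal{E}$ be the free loop of $\mathcal{E}$ on $n$ generators, and let $M_3$ be the free loop of $\mathcal{E}$ on $3$ generators (the free code loop with 3 generators). Then $\mathcal{F}_n$ can be embedded (by an injective loop homomorphism) in a direct product of copies of $M_3$.
   Context: A loop is a set with a binary operation $xy$ such that any two of $x,y,z$ in $xy=z$ determine the third uniquely, and with a two-sided identity $1$. It is Moufang if $((xy)x)z=x(y(xz))$ for all $x,y,z$. The loop commutator $[x,y]$ is the unique element with $xy=(yx)[x,y]$, and the associator $(x,y,z)$ the unique element with $(xy)z=(x(yz))(x,y,z)$. $\mathcal{E}$ is the variety of Moufang loops satisfying the identities $x^4=1$, $[x,y]^2=1$, $(x,y,z)^2=1$, $[x^2,y]=1$, $[[x,y],t]=1$, $[(x,y,z),t]=1$, $(x^2,y,z)=1$, $([x,y],z,t)=1$, $((x,y,z),t,s)=1$; it is the variety generated by all code loops (Moufang loops $L$ with a central subgroup $A$ of order 2 such that $L/A$ is an elementary abelian 2-group). *)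

(* Defs.v *)
From mathcomp Require Import all_boot.
From Stdlib Require Import FunctionalExtensionality.

Set Implicit Arguments.
Unset Strict Implicit.
Unset Printing Implicit Defensive.

(* Unique solvability is
   encoded (equivalently, as usual) by left/right division operations. *)
Record loop := Loop {
  lcarrier :> Type;
  lmul : lcarrier -> lcarrier -> lcarrier;
  lone : lcarrier;
  lldiv : lcarrier -> lcarrier -> lcarrier;  (* lldiv a b = a \ b *)
  lrdiv : lcarrier -> lcarrier -> lcarrier;  (* lrdiv b a = b / a *)
  lmul1l : forall x, lmul lone x = x;
  lmul1r : forall x, lmul x lone = x;
  lmul_ldiv : forall a b, lmul a (lldiv a b) = b;
  lldiv_mul : forall a b, lldiv a (lmul a b) = b;
  lmul_rdiv : forall a b, lmul (lrdiv b a) a = b;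
  lrdiv_mul : forall a b, lrdiv (lmul b a) a = b
}.

Arguments lmul {l}.
Arguments lone {l}.
Arguments lldiv {l}.
Arguments lrdiv {l}.

Section LoopDefs.
Variable L : loop.
Local Notation "x * y" := (lmul x y).
Local Notation "1" := (@lone L).

Definition moufang : Prop :=
  forall x y z : L, ((x * y) * x) * z = x * (y * (x * z)).

Definition lcomm (x y : L) : L := lldiv (y * x) (x * y).
Definition lassoc (x y z : L) : L := lldiv (x * (y * z)) ((x * y) * z).

Definition lsq (x : L) : L := x * x.

Definition in_E : Prop :=
  moufang /\
  (forall x : L, lsq (lsq x) = 1) /\
  (forall x y : L, lsq (lcomm x y) = 1) /\
  (forall x y z : L, lsq (lassoc x y z) = 1) /\
  (forall x y : L, lcomm (lsq x) y = 1) /\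
  (forall x y t : L, lcomm (lcomm x y) t = 1) /\
  (forall x y z t : L, lcomm (lassoc x y z) t = 1) /\
  (forall x y z : L, lassoc (lsq x) y z = 1) /\
  (forall x y z t : L, lassoc (lcomm x y) z t = 1) /\
  (forall x y z t s : L, lassoc (lassoc x y z) t s = 1).

End LoopDefs.

Definition loop_hom (L1 L2 : loop) (h : L1 -> L2) : Prop :=
  forall x y : L1, h (lmul x y) = lmul (h x) (h y).

Definition free_E_loop (n : nat) (F : loop) (g : 'I_n -> F) : Prop :=
  in_E F /\
  forall (L : loop), in_E L -> forall f : 'I_n -> L,
    exists h : F -> L,
      loop_hom h /\ (forall i, h (g i) = f i) /\
      (forall h' : F -> L, loop_hom h' -> (forall i, h' (g i) = f i) ->
         forall x, h' x = h x).

Section Power.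
Variables (M : loop) (I : Type).

Definition pw_mul (a b : I -> M) : I -> M := fun i => lmul (a i) (b i).
Definition pw_one : I -> M := fun _ => lone.
Definition pw_ldiv (a b : I -> M) : I -> M := fun i => lldiv (a i) (b i).
Definition pw_rdiv (a b : I -> M) : I -> M := fun i => lrdiv (a i) (b i).

Lemma pw_mul1l x : pw_mul pw_one x = x.
Proof. apply: functional_extensionality => i; exact: lmul1l. Qed.
Lemma pw_mul1r x : pw_mul x pw_one = x.
Proof. apply: functional_extensionality => i; exact: lmul1r. Qed.
Lemma pw_mul_ldiv a b : pw_mul a (pw_ldiv a b) = b.
Proof. apply: functional_extensionality => i; exact: lmul_ldiv. Qed.
Lemma pw_ldiv_mul a b : pw_ldiv a (pw_mul a b) = b.
Proof. apply: functional_extensionality => i; exact: lldiv_mul. Qed.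
Lemma pw_mul_rdiv a b : pw_mul (pw_rdiv b a) a = b.
Proof. apply: functional_extensionality => i; exact: lmul_rdiv. Qed.
Lemma pw_rdiv_mul a b : pw_rdiv (pw_mul b a) a = b.
Proof. apply: functional_extensionality => i; exact: lrdiv_mul. Qed.

Definition power_loop : loop :=
  @Loop (I -> M) pw_mul pw_one pw_ldiv pw_rdiv
    pw_mul1l pw_mul1r pw_mul_ldiv pw_ldiv_mul pw_mul_rdiv pw_rdiv_mul.

End Power.

(* Main.v *)
Require Import Defs.
From mathcomp Require Import all_boot.
From Stdlib Require Import FunctionalExtensionality.
From mathcomp Require Import zify.
Set Implicit Arguments. Unset Strict Implicit. Unset Printing Implicit Defensive.

Section LoopBasics.
Variable L : loop.
Local Notation "x * y" := (@lmul L x y).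
Local Notation "1" := (@lone L).

Lemma mulI (x y z : L) : x * y = x * z -> y = z.
Proof. by move=> e; rewrite -(lldiv_mul x y) e lldiv_mul. Qed.
Lemma mulIr (x y z : L) : y * x = z * x -> y = z.
Proof. by move=> e; rewrite -(lrdiv_mul x y) e lrdiv_mul. Qed.
Lemma ldivP (x y z : L) : x * y = z -> lldiv x z = y.
Proof. by move<-; rewrite lldiv_mul. Qed.
Lemma assocE (x y z : L) : (x * y) * z = (x * (y * z)) * lassoc x y z.
Proof. by rewrite /lassoc lmul_ldiv. Qed.
Lemma commE (x y : L) : x * y = (y * x) * lcomm x y.
Proof. by rewrite /lcomm lmul_ldiv. Qed.
Lemma ldivv (x : L) : lldiv x x = 1.
Proof. by apply: ldivP; rewrite lmul1r. Qed.
End LoopBasics.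

Section ETheory.
Variable L : loop.
Hypothesis HE : in_E L.
Local Notation "x * y" := (@lmul L x y).
Local Notation "1" := (@lone L).

Lemma Emouf : moufang L. Proof. by case: HE. Qed.
Lemma E4 (x : L) : lsq (lsq x) = 1. Proof. by case: HE => _ [H _]. Qed.
Lemma Ec2 (x y : L) : lsq (lcomm x y) = 1. Proof. by case: HE => _ [_ [H _]]. Qed.
Lemma Ea2 (x y z : L) : lsq (lassoc x y z) = 1. Proof. by case: HE => _ [_ [_ [H _]]]. Qed.
Lemma Esc (x y : L) : lcomm (lsq x) y = 1. Proof. by case: HE => _ [_ [_ [_ [H _]]]]. Qed.
Lemma Ecc (x y t : L) : lcomm (lcomm x y) t = 1. Proof. by case: HE => _ [_ [_ [_ [_ [H _]]]]]. Qed.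
Lemma Eac (x y z t : L) : lcomm (lassoc x y z) t = 1. Proof. by case: HE => _ [_ [_ [_ [_ [_ [H _]]]]]]. Qed.
Lemma Esa (x y z : L) : lassoc (lsq x) y z = 1. Proof. by case: HE => _ [_ [_ [_ [_ [_ [_ [H _]]]]]]]. Qed.
Lemma Eca (x y z t : L) : lassoc (lcomm x y) z t = 1. Proof. by case: HE => _ [_ [_ [_ [_ [_ [_ [_ [H _]]]]]]]]. Qed.
Lemma Eaa (x y z t s : L) : lassoc (lassoc x y z) t s = 1. Proof. by case: HE => _ [_ [_ [_ [_ [_ [_ [_ [_ H]]]]]]]]. Qed.

Definition cn (c : L) := (forall y, c * y = y * c) /\ (forall y z, (c * y) * z = c * (y * z)) /\ c * c = 1.

Lemma cn_of (c : L) : (forall y, lcomm c y = 1) -> (forall y z, lassoc c y z = 1) -> lsq c = 1 -> cn c.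
Proof.
move=> Hc Ha Hs; split; [|split] => //.
- by move=> y; rewrite commE Hc lmul1r.
- by move=> y z; rewrite assocE Ha lmul1r.
Qed.
Lemma cn_sq x : cn (lsq x). Proof. exact: cn_of (Esc x) (Esa x) (E4 x). Qed.
Lemma cn_comm x y : cn (lcomm x y). Proof. exact: cn_of (Ecc x y) (Eca x y) (Ec2 x y). Qed.
Lemma cn_assoc x y z : cn (lassoc x y z). Proof. exact: cn_of (Eac x y z) (Eaa x y z) (Ea2 x y z). Qed.
Lemma cn1 : cn 1.
Proof. split; [|split]. by move=> y; rewrite lmul1l lmul1r. by move=> y z; rewrite !lmul1l. by rewrite lmul1l. Qed.

Section CN.
Variable c : L.
Hypothesis Hc : cn c.
Lemma cnC y : c * y = y * c. Proof. by case: Hc. Qed.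
Lemma cnL y z : (c * y) * z = c * (y * z). Proof. by case: Hc => _ []. Qed.
Lemma cnK : c * c = 1. Proof. by case: Hc => _ []. Qed.
Lemma cnM y z : (y * c) * z = y * (c * z).
Proof.
apply: (@mulI _ c); rewrite -Emouf.
by rewrite [in RHS](cnL y c) [in RHS]cnL.
Qed.
Lemma cnR y z : (y * z) * c = y * (z * c).
Proof. by rewrite -cnC -cnL cnC cnM cnC. Qed.
Lemma cnAc x y : (x * c) * y = (x * y) * c.
Proof. by rewrite cnM cnC cnR. Qed.
Lemma cnKr x : (x * c) * c = x.
Proof. by rewrite cnR cnK lmul1r. Qed.
End CN.

Lemma cn_mul c d : cn c -> cn d -> cn (c * d).
Proof.
move=> Hc Hd; split; [|split].
- by move=> y; rewrite (cnL Hc) (cnC Hd) -(cnL Hc) (cnC Hc) (cnM Hc).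
- by move=> y z; rewrite (cnL Hc) (cnL Hc) (cnL Hd) -(cnL Hc).
- by rewrite (cnL Hc) -(cnL Hd) -(cnC Hc) (cnR Hd) (cnK Hd) lmul1r (cnK Hc).
Qed.

Lemma cn_swap x c d : cn c -> cn d -> (x * c) * d = (x * d) * c.
Proof. by move=> Hc Hd; rewrite (cnR Hd) -(cnC Hd) -(cnR Hc). Qed.

Lemma cn_eq c d : cn c -> cn d -> c * d = 1 -> c = d.
Proof. by move=> Hc Hd e; rewrite -[c](cnKr Hd) e lmul1l. Qed.


Definition eqv (x y : L) := exists c, cn c /\ x = y * c.
Lemma eqv_refl x : eqv x x.
Proof. by exists 1; split; [exact: cn1 | rewrite lmul1r]. Qed.
Lemma eqv_sym x y : eqv x y -> eqv y x.
Proof. by case=> c [Hc ->]; exists c; split=> //; rewrite cnKr. Qed.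
Lemma eqv_trans x y z : eqv x y -> eqv y z -> eqv x z.
Proof.
case=> c [Hc ->] [d [Hd ->]]; exists (d * c); split; first exact: cn_mul.
by rewrite (cnR Hc).
Qed.
Lemma eqv_mul x x' y y' : eqv x x' -> eqv y y' -> eqv (x * y) (x' * y').
Proof.
case=> c [Hc ->] [d [Hd ->]]; exists (c * d); split; first exact: cn_mul.
by rewrite -(cnR Hd) (cnAc Hc) (cnR Hd).
Qed.
Lemma eqv_cn x c : cn c -> eqv (x * c) x.
Proof. by move=> Hc; exists c. Qed.
Lemma eqv_comm x y : eqv (x * y) (y * x).
Proof. exists (lcomm x y); split; [exact: cn_comm | exact: commE]. Qed.
Lemma eqv_assoc x y z : eqv ((x * y) * z) (x * (y * z)).
Proof. exists (lassoc x y z); split; [exact: cn_assoc | exact: assocE]. Qed.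
Lemma eqv_sqr x : eqv (x * x) 1.
Proof. by exists (x * x); split; [exact: (cn_sq x) | rewrite lmul1l]. Qed.

Lemma a_inv1 x y z c : cn c -> lassoc (x * c) y z = lassoc x y z.
Proof.
move=> Hc; apply: ldivP.
rewrite !(cnAc Hc) (assocE x y z); first [done | exact: (cn_swap _ Hc (cn_assoc _ _ _))].
Qed.
Lemma a_inv2 x y z c : cn c -> lassoc x (y * c) z = lassoc x y z.
Proof.
move=> Hc; apply: ldivP.
rewrite !(cnAc Hc) -!(cnR Hc) !(cnAc Hc) (assocE x y z); first [done | exact: (cn_swap _ Hc (cn_assoc _ _ _))].
Qed.
Lemma a_inv3 x y z c : cn c -> lassoc x y (z * c) = lassoc x y z.
Proof.
move=> Hc; apply: ldivP.
rewrite -!(cnR Hc) (assocE x y z); first [done | exact: (cn_swap _ Hc (cn_assoc _ _ _))].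
Qed.
Lemma c_inv1 x y c : cn c -> lcomm (x * c) y = lcomm x y.
Proof.
move=> Hc; apply: ldivP.
by rewrite -(cnR Hc) !(cnAc Hc) (commE x y).
Qed.
Lemma c_inv2 x y c : cn c -> lcomm x (y * c) = lcomm x y.
Proof.
move=> Hc; apply: ldivP.
rewrite (cnAc Hc) -(cnR Hc) (commE x y); first [done | exact: (cn_swap _ Hc (cn_comm _ _))].
Qed.
Lemma s_inv x c : cn c -> lsq (x * c) = lsq x.
Proof.
move=> Hc; rewrite /lsq -(cnR Hc) (cnAc Hc) (cnR Hc) (cnK Hc) lmul1r //.
Qed.

Lemma a_eqv x x' y y' z z' : eqv x x' -> eqv y y' -> eqv z z' ->
  lassoc x y z = lassoc x' y' z'.
Proof.
case=> a [Ha ->] [b [Hb ->]] [c [Hc ->]].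
by rewrite (a_inv1 _ _ _ Ha) (a_inv2 _ _ _ Hb) (a_inv3 _ _ _ Hc).
Qed.
Lemma c_eqv x x' y y' : eqv x x' -> eqv y y' -> lcomm x y = lcomm x' y'.
Proof.
case=> a [Ha ->] [b [Hb ->]].
by rewrite (c_inv1 _ _ Ha) (c_inv2 _ _ Hb).
Qed.
Lemma s_eqv x x' : eqv x x' -> lsq x = lsq x'.
Proof. by case=> a [Ha ->]; rewrite (s_inv _ Ha). Qed.

Lemma pent x y z w :
  lassoc x y (z * w) * lassoc (x * y) z w =
  (lassoc y z w * lassoc x (y * z) w) * lassoc x y z.
Proof.
have e1 : ((x * y) * z) * w = (x * (y * (z * w))) * (lassoc x y (z * w) * lassoc (x * y) z w).
  by rewrite assocE (assocE x y (z * w)) (cnR (cn_assoc _ _ _)).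
have e2 : ((x * y) * z) * w = (x * (y * (z * w))) *
              ((lassoc y z w * lassoc x (y * z) w) * lassoc x y z).
  rewrite (assocE x y z) (cnAc (cn_assoc x y z)) (assocE x (y * z) w) (assocE y z w).
  rewrite -(cnR (cn_assoc y z w)) (cnR (cn_assoc x (y * z) w)) (cnR (cn_assoc x y z)) //.
by apply: (@mulI _ (x * (y * (z * w)))); rewrite -e1 -e2.
Qed.

Lemma moufA x y z : (lassoc y x z * lassoc x (y * x) z) * lassoc x y x = 1.
Proof.
have e : ((x * y) * x) * z = (x * (y * (x * z))) * ((lassoc y x z * lassoc x (y * x) z) * lassoc x y x).
  rewrite (assocE x y x) (cnAc (cn_assoc x y x)) (assocE x (y * x) z) (assocE y x z).
  by rewrite -(cnR (cn_assoc y x z)) (cnR (cn_assoc x (y * x) z)) (cnR (cn_assoc x y x)).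
rewrite Emouf -{1}[x * (y * (x * z))]lmul1r in e.
exact: (esym (mulI e)).
Qed.

Lemma aLA (x z : L) : lassoc x x z = 1.
Proof. by have := Emouf x 1 z; rewrite lmul1r lmul1l => e; rewrite /lassoc e ldivv. Qed.
Lemma aFL (x y : L) : lassoc x y x = 1.
Proof. by have := Emouf x y 1; rewrite !lmul1r => e; rewrite /lassoc e ldivv. Qed.
Lemma aRA (y x : L) : lassoc y x x = 1.
Proof. by have := moufA x y x; rewrite !aFL !lmul1r. Qed.
Lemma a1l (y z : L) : lassoc 1 y z = 1. Proof. by rewrite /lassoc !lmul1l ldivv. Qed.
Lemma a1m (x z : L) : lassoc x 1 z = 1. Proof. by rewrite /lassoc lmul1l lmul1r ldivv. Qed.
Lemma a1r (x y : L) : lassoc x y 1 = 1. Proof. by rewrite /lassoc !lmul1r ldivv. Qed.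
Lemma aSq (x y z : L) : lassoc (x * x) y z = 1. Proof. exact: (Esa x y z). Qed.

Lemma aQ3 (x z w : L) : lassoc x (x * z) w = lassoc x z w.
Proof.
have := pent x x z w; rewrite !aLA aSq !lmul1r => e.
by rewrite (cn_eq (cn_assoc _ _ _) (cn_assoc _ _ _) (esym e)).
Qed.
Lemma aS12 (x y z : L) : lassoc y x z = lassoc x y z.
Proof.
have := moufA x y z; rewrite aFL lmul1r => e.
rewrite (cn_eq (cn_assoc _ _ _) (cn_assoc _ _ _) e) -(aQ3 x y z).
apply: a_eqv; [exact: eqv_refl | exact: eqv_comm | exact: eqv_refl].
Qed.
Lemma aQ1 (x y z : L) : lassoc x (y * z) z = lassoc x y z.
Proof.
have := pent x y z z.
rewrite (@a_eqv x x y y (z * z) 1 (eqv_refl _) (eqv_refl _) (eqv_sqr z)) a1r !aRA !lmul1l ?lmul1r => e.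
by rewrite (cn_eq (cn_assoc _ _ _) (cn_assoc _ _ _) (esym e)).
Qed.
Lemma aQ4 (x y w : L) : lassoc x y (y * w) = lassoc x y w.
Proof.
have := pent x y y w.
rewrite (@a_eqv x x (y * y) 1 w w (eqv_refl _) (eqv_sqr y) (eqv_refl _)) a1m aLA aRA !lmul1l => e.
rewrite (cn_eq (cn_assoc _ _ _) (cn_assoc _ _ _) e) aS12.
rewrite (@a_eqv y y (x * y) (y * x) w w (eqv_refl _) (eqv_comm _ _) (eqv_refl _)) aQ3 aS12 //.
Qed.
Lemma aQ8 (a b c : L) : lassoc (a * b) b c = lassoc a b c.
Proof.
rewrite aS12 (@a_eqv b b (a * b) (b * a) c c (eqv_refl _) (eqv_comm _ _) (eqv_refl _)) aQ3 aS12 //.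
Qed.
Lemma aQ6 (y z w : L) : lassoc y z (y * w) = lassoc y z w.
Proof. by rewrite aS12 aQ4 aS12. Qed.
Lemma aS23 (x y z : L) : lassoc x y z = lassoc x z y.
Proof.
rewrite -aQ1 -(aQ1 x z y).
rewrite -{1}(@a_eqv x x (y * z) (y * z) ((y * z) * y) z (eqv_refl _) (eqv_refl _)).
  rewrite aQ4; apply: a_eqv; [exact: eqv_refl | exact: eqv_comm | exact: eqv_refl].
apply: (eqv_trans (eqv_mul (eqv_comm y z) (eqv_refl y))).
apply: (eqv_trans (eqv_assoc _ _ _)).
apply: (eqv_trans (eqv_mul (eqv_refl z) (eqv_sqr y))).
rewrite lmul1r; exact: eqv_refl.
Qed.


(* reflexive normaliser for products of cn elements *)
Inductive cexp := CAt of nat | COne | CMul of cexp & cexp.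
Fixpoint ceval (ctx : seq L) (e : cexp) : L :=
  match e with CAt i => nth 1 ctx i | COne => 1 | CMul a b => ceval ctx a * ceval ctx b end.
Fixpoint bxor (s t : seq bool) : seq bool :=
  match s, t with
  | [::], _ => t
  | _, [::] => s
  | a :: s', b :: t' => (a (+) b) :: bxor s' t'
  end.
Fixpoint cbits (e : cexp) : seq bool :=
  match e with CAt i => rcons (nseq i false) true | COne => [::]
  | CMul a b => bxor (cbits a) (cbits b) end.
Fixpoint prb (ctx : seq L) (b : seq bool) : L :=
  match b with [::] => 1
  | bi :: b' => (if bi then nth 1 ctx 0 else 1) * prb (behead ctx) b' end.
Fixpoint beqb (s t : seq bool) : bool :=
  match s, t with
  | [::], _ => all negb t
  | _, [::] => all negb s
  | a :: s', b :: t' => (a == b) && beqb s' t'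
  end.
Fixpoint allcn (ctx : seq L) : Prop :=
  match ctx with [::] => True | x :: c => cn x /\ allcn c end.

Lemma allcn_nth ctx : allcn ctx -> forall i, cn (nth 1 ctx i).
Proof.
elim: ctx => [|x c IH] /= H i; first by rewrite nth_nil; exact: cn1.
case: i => [|i] /=; [exact: H.1 | exact: IH H.2 i].
Qed.
Lemma allcn_behead ctx : allcn ctx -> allcn (behead ctx).
Proof. by case: ctx => //= x c []. Qed.

Lemma cn_if (b : bool) x : cn x -> cn (if b then x else 1).
Proof. by case: b => // _; exact: cn1. Qed.

Lemma prb_cn ctx b : allcn ctx -> cn (prb ctx b).
Proof.
elim: b ctx => [|a b IH] ctx H /=; first exact: cn1.
apply: cn_mul; first by apply: cn_if; exact: allcn_nth.
exact: IH (allcn_behead H).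
Qed.

Lemma ac_a x P Q : cn x -> cn P -> cn Q -> P * Q = (x * P) * (x * Q).
Proof.
move=> Hx HP HQ.
symmetry; rewrite (cnL Hx) -(cnL HP) -(cnC Hx) (cnL Hx) -(cnL Hx) (cnK Hx) lmul1l //.
Qed.
Lemma ac_b x P Q : cn x -> cn P -> cn Q -> x * (P * Q) = P * (x * Q).
Proof. by move=> Hx HP HQ; rewrite -(cnL HP) -(cnC Hx) (cnL Hx). Qed.

Lemma prb_xor ctx s t : allcn ctx -> prb ctx (bxor s t) = prb ctx s * prb ctx t.
Proof.
elim: s t ctx => [|a s IH] [|b t] ctx H /=; rewrite ?lmul1l ?lmul1r //.
rewrite IH; last exact: allcn_behead.
have Hx := allcn_nth H 0.
have HP := prb_cn s (allcn_behead H).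
have HQ := prb_cn t (allcn_behead H).
case: a; case: b => /=; rewrite ?lmul1l.
- exact: ac_a.
- by rewrite (cnL Hx).
- exact: ac_b.
- by [].
Qed.

Lemma prb_at ctx i : prb ctx (rcons (nseq i false) true) = nth 1 ctx i.
Proof.
elim: i ctx => [|i IH] ctx /=; first by rewrite lmul1r.
by rewrite lmul1l IH; case: ctx => [|x c] //=; rewrite !nth_nil.
Qed.

Lemma cbits_ok ctx e : allcn ctx -> ceval ctx e = prb ctx (cbits e).
Proof.
move=> H; elim: e => [i||a IHa b IHb] /=; first by rewrite prb_at.
  by [].
by rewrite prb_xor // IHa IHb.
Qed.

Lemma prb_false ctx t : all negb t -> prb ctx t = 1.
Proof.
elim: t ctx => [|b t IH] ctx //= /andP [/negbTE -> H].
by rewrite lmul1l IH.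
Qed.

Lemma beqb_ok ctx s t : beqb s t -> prb ctx s = prb ctx t.
Proof.
elim: s t ctx => [|a s IH] t ctx.
  by move=> H; rewrite (prb_false ctx H).
case: t => [|b t] H.
  by rewrite (prb_false ctx H).
move: H => /= /andP [/eqP -> H]; by rewrite (IH t (behead ctx) H).
Qed.

Lemma cexp_eq ctx e1 e2 : allcn ctx -> beqb (cbits e1) (cbits e2) ->
  ceval ctx e1 = ceval ctx e2.
Proof. by move=> H B; rewrite !cbits_ok //; exact: beqb_ok. Qed.


Ltac inlist x l :=
  lazymatch l with
  | nil => false
  | cons x _ => true
  | cons _ ?l' => inlist x l'
  end.
Ltac collect t acc :=
  lazymatch t with
  | lmul ?a ?b => let acc1 := collect a acc in collect b acc1
  | lone => acc
  | _ => let b := inlist t acc in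
         lazymatch b with true => acc | false => constr:(cons t acc) end
  end.
Ltac find_idx x l :=
  lazymatch l with
  | cons x _ => constr:(0)
  | cons _ ?l' => let i := find_idx x l' in constr:(S i)
  end.
Ltac reify t ctx :=
  lazymatch t with
  | lmul ?a ?b => let ea := reify a ctx in let eb := reify b ctx in constr:(CMul ea eb)
  | lone => constr:(COne)
  | _ => let i := find_idx t ctx in constr:(CAt i)
  end.
Ltac cgroup_solve_cn := cbn [allcn];
  repeat match goal with |- _ /\ _ => split | |- True => exact I end;
  try assumption; try (apply: cn_assoc; assumption); try (apply: cn_comm; assumption);
  try (apply: cn_sq; assumption).
Ltac cgroup :=
  lazymatch goal with
  | |- @eq (lcarrier ?L) ?u ?v =>
    let ctx0 := collect u (@nil (lcarrier L)) in
    let ctx := collect v ctx0 in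
    let eu := reify u ctx in let ev := reify v ctx in
    change (ceval ctx eu = ceval ctx ev);
    apply: cexp_eq; solve [ assumption | cgroup_solve_cn | vm_compute; reflexivity ]
  end.

Lemma test (a b c : L) : cn a -> cn b -> cn c -> (a * (b * c)) * (b * a) = c * 1.
Proof. move=> *. cgroup. Qed.

Lemma solve3 a b c d e x y k : cn a -> cn b -> cn c -> cn d -> cn e -> cn x -> cn y -> cn k ->
  b * a = (c * d) * e -> b * x = (c * y) * e -> d * x = (c * k) * y -> a = k * c.
Proof.
move=> Ha Hb Hc Hd He Hx Hy Hk P1 P2 P3.
have h : ((b * a) * ((c * d) * e)) * (((b * x) * ((c * y) * e)) * ((d * x) * ((c * k) * y))) = 1.
  rewrite P1 P2 P3; cgroup.
transitivity (a * (((b * a) * ((c * d) * e)) * (((b * x) * ((c * y) * e)) * ((d * x) * ((c * k) * y))))).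
  by rewrite h lmul1r.
cgroup.
Qed.

Lemma aL1 (x y z w : L) : lassoc (x * y) z w = lassoc x z w * lassoc y z w.
Proof.
have P1 := pent x y z w.
have P2 := pent x y z (y * w).
have P3 := pent x (y * z) (y * w) z.
have e1 : lassoc x y (z * (y * w)) = lassoc x y (z * w).
  rewrite -(aQ4 x y (z * w)); apply: a_eqv; try exact: eqv_refl.
  apply: (eqv_trans (eqv_sym (eqv_assoc _ _ _))).
  apply: (eqv_trans (eqv_mul (eqv_comm _ _) (eqv_refl _))).
  exact: eqv_assoc.
have e2 : lassoc y z (y * w) = lassoc y z w by exact: aQ6.
have e3 : lassoc x (y * z) ((y * w) * z) = lassoc x (y * z) w.
  rewrite -(aQ4 x (y * z) w); apply: a_eqv; try exact: eqv_refl.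
  apply: (eqv_trans (eqv_assoc _ _ _)).
  apply: (eqv_trans (eqv_mul (eqv_refl _) (eqv_comm _ _))).
  exact: eqv_sym (eqv_assoc _ _ _).
have e4 : lassoc (x * (y * z)) (y * w) z = lassoc (x * y) z (y * w).
  rewrite aS23 -(aQ8 (x * y) z (y * w)); apply: a_eqv; try exact: eqv_refl.
  exact: eqv_sym (eqv_assoc _ _ _).
have e5 : lassoc (y * z) (y * w) z = lassoc y z w by rewrite aS23 aQ8 aQ6.
have e6 : lassoc x ((y * z) * (y * w)) z = lassoc x z w.
  rewrite (aS23 x z w) -(aQ1 x w z); apply: a_eqv; try exact: eqv_refl.
  apply: (eqv_trans (eqv_mul (eqv_comm _ _) (eqv_refl _))).
  apply: (eqv_trans (eqv_assoc _ _ _)).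
  apply: (eqv_trans (eqv_mul (eqv_refl _) (eqv_sym (eqv_assoc _ _ _)))).
  apply: (eqv_trans (eqv_mul (eqv_refl _) (eqv_mul (eqv_sqr _) (eqv_refl _)))).
  rewrite lmul1l; exact: eqv_comm.
rewrite e1 e2 in P2; rewrite e3 e4 e5 e6 in P3.
apply: (solve3 _ _ _ _ _ _ _ _ P1 P2 P3); exact: cn_assoc.
Qed.

Lemma aL2 (x y z w : L) : lassoc x (y * z) w = lassoc x y w * lassoc x z w.
Proof. by rewrite aS12 aL1 !(aS12 x). Qed.
Lemma aL3 (x y z w : L) : lassoc x y (z * w) = lassoc x y z * lassoc x y w.
Proof. by rewrite aS23 aL2 !(aS23 x y). Qed.

Lemma assocE' (x y z : L) : x * (y * z) = ((x * y) * z) * lassoc x y z.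
Proof. by rewrite (assocE x y z) (cnKr (cn_assoc _ _ _)). Qed.

Lemma cid (x y z : L) : lcomm (x * y) z =
  (lcomm x z * lcomm y z) * ((lassoc z x y * lassoc x z y) * lassoc x y z).
Proof.
apply: ldivP.
rewrite (assocE x y z) (commE y z) -(cnR (cn_comm y z)) (assocE' x z y) (commE x z).
rewrite (cnAc (cn_comm x z)) (assocE z x y).
rewrite [in RHS](cnR (cn_comm x z)) [in RHS](cnR (cn_assoc x z y)) [in RHS](cnR (cn_comm y z)) [in RHS](cnR (cn_assoc x y z)).
congr (_ * _); cgroup.
Qed.


Lemma sid (x y : L) : lsq (x * y) =
  (lsq x * lsq y) * (lcomm y x * ((lassoc x y y * lassoc y x y) * lassoc x y (x * y))).
Proof.
have e1 : y * (x * y) = x * (((lsq y * lassoc x y y) * lcomm y x) * lassoc y x y).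
  rewrite (assocE' y x y) (commE y x) (cnAc (cn_comm y x)) (assocE x y y) -/(lsq y).
  rewrite (cnR (cn_assoc x y y)) (cnR (cn_comm y x)) (cnR (cn_assoc y x y)) //.
have Hd : cn (((lsq y * lassoc x y y) * lcomm y x) * lassoc y x y).
  exact: cn_mul (cn_mul (cn_mul (cn_sq y) (cn_assoc x y y)) (cn_comm y x)) (cn_assoc y x y).
rewrite {1}/lsq (assocE x y (x * y)) e1 -(cnR Hd) -/(lsq x).
cgroup.
Qed.


Lemma c_self (x : L) : lcomm x x = 1.
Proof. exact: ldivv. Qed.
Lemma c_sym (x y : L) : lcomm y x = lcomm x y.
Proof.
apply: cn_eq; try exact: cn_comm.
apply: (@mulI _ (x * y)); rewrite lmul1r -(cnR (cn_comm x y)).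
by rewrite -commE -commE.
Qed.
Lemma c1l (y : L) : lcomm 1 y = 1. Proof. by rewrite /lcomm lmul1l lmul1r ldivv. Qed.
Lemma c1r (x : L) : lcomm x 1 = 1. Proof. by rewrite /lcomm lmul1l lmul1r ldivv. Qed.
Lemma s1 : lsq (1 : L) = 1. Proof. by rewrite /lsq lmul1l. Qed.

End ETheory.

Ltac inlist x l :=
  lazymatch l with
  | nil => false
  | cons x _ => true
  | cons _ ?l' => inlist x l'
  end.
Ltac collect t acc :=
  lazymatch t with
  | lmul ?a ?b => let acc1 := collect a acc in collect b acc1
  | lone => acc
  | _ => let b := inlist t acc in
         lazymatch b with true => acc | false => constr:(cons t acc) end
  end.
Ltac find_idx x l :=
  lazymatch l with
  | cons x _ => constr:(0)
  | cons _ ?l' => let i := find_idx x l' in constr:(S i)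
  end.
Ltac reify t ctx :=
  lazymatch t with
  | lmul ?a ?b => let ea := reify a ctx in let eb := reify b ctx in constr:(CMul ea eb)
  | lone => constr:(COne)
  | _ => let i := find_idx t ctx in constr:(CAt i)
  end.
Ltac cgroup_solve_cn := cbn [allcn];
  repeat match goal with |- _ /\ _ => split | |- True => exact I end;
  try assumption; try (apply: cn_assoc; assumption); try (apply: cn_comm; assumption);
  try (apply: cn_sq; assumption).
Ltac cgroup :=
  lazymatch goal with
  | |- @eq (lcarrier ?L) ?u ?v =>
    let ctx0 := collect u (@nil (lcarrier L)) in
    let ctx := collect v ctx0 in
    let eu := reify u ctx in let ev := reify v ctx in
    change (ceval ctx eu = ceval ctx ev);
    apply: cexp_eq; solve [ assumption | cgroup_solve_cn | vm_compute; reflexivity ]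
  end.


Section Homs.
Variables (L1 L2 : loop) (h : L1 -> L2).
Hypothesis Hh : loop_hom h.
Lemma hom1 : h lone = lone.
Proof.
apply: (@mulI _ (h lone)); by rewrite lmul1r -(Hh lone lone) lmul1l.
Qed.
Lemma hom_ldiv a b : h (lldiv a b) = lldiv (h a) (h b).
Proof. by symmetry; apply: ldivP; rewrite -Hh lmul_ldiv. Qed.
Lemma hom_rdiv a b : h (lrdiv b a) = lrdiv (h b) (h a).
Proof. by apply: (@mulIr _ (h a)); rewrite -Hh !lmul_rdiv. Qed.
Lemma hom_comm a b : h (lcomm a b) = lcomm (h a) (h b).
Proof. by rewrite /lcomm hom_ldiv !Hh. Qed.
Lemma hom_assoc a b c : h (lassoc a b c) = lassoc (h a) (h b) (h c).
Proof. by rewrite /lassoc hom_ldiv !Hh. Qed.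
Lemma hom_sq a : h (lsq a) = lsq (h a).
Proof. by rewrite /lsq Hh. Qed.
End Homs.

Lemma hom_comp (L1 L2 L3 : loop) (h : L1 -> L2) (k : L2 -> L3) :
  loop_hom h -> loop_hom k -> loop_hom (fun x => k (h x)).
Proof. by move=> Hh Hk x y; rewrite Hh Hk. Qed.

From Stdlib Require Import ProofIrrelevance.

Section Sub.
Variables (F : loop) (P : F -> Prop).
Hypothesis P1 : P lone.
Hypothesis Pmul : forall x y, P x -> P y -> P (lmul x y).
Hypothesis Pldiv : forall x y, P x -> P y -> P (lldiv x y).
Hypothesis Prdiv : forall x y, P x -> P y -> P (lrdiv x y).
Definition subT := {x : F | P x}.
Definition smul (a b : subT) : subT := exist _ _ (Pmul (proj2_sig a) (proj2_sig b)).
Definition sldiv (a b : subT) : subT := exist _ _ (Pldiv (proj2_sig a) (proj2_sig b)).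
Definition srdiv (a b : subT) : subT := exist _ _ (Prdiv (proj2_sig a) (proj2_sig b)).
Definition sone : subT := exist _ _ P1.
Lemma sub_eq (a b : subT) : proj1_sig a = proj1_sig b -> a = b.
Proof.
case: a b => [a pa] [b pb] /= e; subst b; f_equal; exact: proof_irrelevance.
Qed.
Lemma s_mul1l x : smul sone x = x. Proof. by apply: sub_eq; rewrite /= lmul1l. Qed.
Lemma s_mul1r x : smul x sone = x. Proof. by apply: sub_eq; rewrite /= lmul1r. Qed.
Lemma s_mul_ldiv a b : smul a (sldiv a b) = b. Proof. by apply: sub_eq; rewrite /= lmul_ldiv. Qed.
Lemma s_ldiv_mul a b : sldiv a (smul a b) = b. Proof. by apply: sub_eq; rewrite /= lldiv_mul. Qed.
Lemma s_mul_rdiv a b : smul (srdiv b a) a = b. Proof. by apply: sub_eq; rewrite /= lmul_rdiv. Qed.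
Lemma s_rdiv_mul a b : srdiv (smul b a) a = b. Proof. by apply: sub_eq; rewrite /= lrdiv_mul. Qed.
Definition subloop : loop :=
  @Loop subT smul sone sldiv srdiv s_mul1l s_mul1r s_mul_ldiv s_ldiv_mul s_mul_rdiv s_rdiv_mul.

Lemma subloop_E : in_E F -> in_E subloop.
Proof.
move=> HE.
split; [|split; [|split; [|split; [|split; [|split; [|split; [|split; [|split]]]]]]]].
- by move=> x y z; apply: sub_eq; exact: (Emouf HE).
- by move=> x; apply: sub_eq; exact: (E4 HE).
- by move=> x y; apply: sub_eq; exact: (Ec2 HE).
- by move=> x y z; apply: sub_eq; exact: (Ea2 HE).
- by move=> x y; apply: sub_eq; exact: (Esc HE).
- by move=> x y t; apply: sub_eq; exact: (Ecc HE).
- by move=> x y z t; apply: sub_eq; exact: (Eac HE).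
- by move=> x y z; apply: sub_eq; exact: (Esa HE).
- by move=> x y z t; apply: sub_eq; exact: (Eca HE).
- by move=> x y z t s; apply: sub_eq; exact: (Eaa HE).
Qed.
End Sub.

Lemma gen_ind (n : nat) (F : loop) (g : 'I_n -> F) (HF : free_E_loop g) (P : F -> Prop) :
  P lone -> (forall i, P (g i)) ->
  (forall x y, P x -> P y -> P (lmul x y)) ->
  (forall x y, P x -> P y -> P (lldiv x y)) ->
  (forall x y, P x -> P y -> P (lrdiv x y)) -> forall x, P x.
Proof.
move=> P1 Pg Pmul Pldiv Prdiv.
case: HF => HE Hu.
have [h [hh [hg _]]] := Hu (subloop P1 Pmul Pldiv Prdiv) (subloop_E P1 Pmul Pldiv Prdiv HE)
   (fun i => exist _ (g i) (Pg i)).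
have [h0 [_ [_ U]]] := Hu F HE g.
have e1 : forall x, x = h0 x by apply: U.
have e2 : forall x, proj1_sig (h x) = h0 x.
  apply: U; first by move=> x y; rewrite hh.
  by move=> i; rewrite hg.
by move=> x; have := proj2_sig (h x); rewrite e2 -e1.
Qed.

Lemma power_E (M : loop) (I : Type) : in_E M -> in_E (power_loop M I).
Proof.
move=> HE.
split; [|split; [|split; [|split; [|split; [|split; [|split; [|split; [|split]]]]]]]].
- by move=> x y z; apply: functional_extensionality => i; exact: (Emouf HE).
- by move=> x; apply: functional_extensionality => i; exact: (E4 HE).
- by move=> x y; apply: functional_extensionality => i; exact: (Ec2 HE).
- by move=> x y z; apply: functional_extensionality => i; exact: (Ea2 HE).
- by move=> x y; apply: functional_extensionality => i; exact: (Esc HE).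
- by move=> x y t; apply: functional_extensionality => i; exact: (Ecc HE).
- by move=> x y z t; apply: functional_extensionality => i; exact: (Eac HE).
- by move=> x y z; apply: functional_extensionality => i; exact: (Esa HE).
- by move=> x y z t; apply: functional_extensionality => i; exact: (Eca HE).
- by move=> x y z t s; apply: functional_extensionality => i; exact: (Eaa HE).
Qed.

Lemma E_crit (L : loop) (C : L -> Prop) :
  moufang L -> (forall x : L, lsq (lsq x) = lone) ->
  (forall c, C c -> (forall y, lcomm c y = lone) /\ (forall y z, lassoc c y z = lone) /\ lsq c = lone) ->
  (forall x, C (lsq x)) -> (forall x y, C (lcomm x y)) -> (forall x y z, C (lassoc x y z)) ->
  in_E L.
Proof.
move=> Hm H4 HC Cs Cc Ca.
split; [|split; [|split; [|split; [|split; [|split; [|split; [|split; [|split]]]]]]]] => //.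
- by move=> x y; case: (HC _ (Cc x y)) => _ [].
- by move=> x y z; case: (HC _ (Ca x y z)) => _ [].
- by move=> x y; case: (HC _ (Cs x)) => [].
- by move=> x y t; case: (HC _ (Cc x y)) => [].
- by move=> x y z t; case: (HC _ (Ca x y z)) => [].
- by move=> x y z; case: (HC _ (Cs x)) => _ [].
- by move=> x y z t; case: (HC _ (Cc x y)) => _ [].
- by move=> x y z t s; case: (HC _ (Ca x y z)) => _ [].
Qed.

Lemma z2_1l x : addb false x = x. Proof. by case: x. Qed.
Lemma z2_1r x : addb x false = x. Proof. by case: x. Qed.
Lemma z2_a a b : addb a (addb a b) = b. Proof. by case: a; case: b. Qed.
Lemma z2_b a b : addb (addb b a) a = b. Proof. by case: a; case: b. Qed.
Definition Z2 : loop := @Loop bool addb false addb addb z2_1l z2_1r z2_a z2_a z2_b z2_b.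
Lemma Z2_E : in_E Z2.
Proof.
apply: (E_crit (C := fun c : Z2 => c = false)).
- by move=> [] [] [].
- by move=> [].
- move=> c ->; split; [|split]; [by move=> [] | by move=> [] [] | by []].
- by move=> [].
- by move=> [] [].
- by move=> [] [] [].
Qed.

(* the Moufang loop Q16 (a code loop of order 16) *)
Definition Q := ((bool * bool * bool) * bool)%type.
Definition vadd (u v : bool * bool * bool) : bool * bool * bool :=
  let: (u0, u1, u2) := u in let: (v0, v1, v2) := v in (u0 (+) v0, u1 (+) v1, u2 (+) v2).
Definition qth (u v : bool * bool * bool) : bool :=
  let: (u0, u1, u2) := u in let: (v0, v1, v2) := v in
  (u0 && u1 && v2) (+) (u0 && u2 && v1) (+) (u1 && u2 && v0).
Definition qmul (a b : Q) : Q := (vadd a.1 b.1, a.2 (+) b.2 (+) qth a.1 b.1).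
Definition qone : Q := ((false, false, false), false).
Definition qldiv (a c : Q) : Q := let w := vadd a.1 c.1 in (w, a.2 (+) c.2 (+) qth a.1 w).
Definition qrdiv (c b : Q) : Q := let w := vadd c.1 b.1 in (w, c.2 (+) b.2 (+) qth w b.1).
Lemma q_1l x : qmul qone x = x. Proof. by move: x => [[[[] []] []] []]. Qed.
Lemma q_1r x : qmul x qone = x. Proof. by move: x => [[[[] []] []] []]. Qed.
Lemma q_a a b : qmul a (qldiv a b) = b.
Proof. by move: a b => [[[[] []] []] []] [[[[] []] []] []]. Qed.
Lemma q_b a b : qldiv a (qmul a b) = b.
Proof. by move: a b => [[[[] []] []] []] [[[[] []] []] []]. Qed.
Lemma q_c a b : qmul (qrdiv b a) a = b.
Proof. by move: a b => [[[[] []] []] []] [[[[] []] []] []]. Qed.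
Lemma q_d a b : qrdiv (qmul b a) a = b.
Proof. by move: a b => [[[[] []] []] []] [[[[] []] []] []]. Qed.
Definition Qloop : loop := @Loop Q qmul qone qldiv qrdiv q_1l q_1r q_a q_b q_c q_d.

Definition enumQ : seq Q :=
  [seq ((x.1.1.1, x.1.1.2, x.1.2), x.2) | x <- [seq (a, b) | a <- [seq (a, b) | a <- [seq (a, b) | a <- [:: false; true], b <- [:: false; true]], b <- [:: false; true]], b <- [:: false; true]]].
Lemma memQ (x : Q) : x \in enumQ.
Proof. by move: x => [[[[] []] []] []]. Qed.
Lemma allQ1 (p : Q -> bool) : all p enumQ -> forall x, p x.
Proof. by move/allP=> H x; apply: H; exact: memQ. Qed.
Lemma allQ2 (p : Q -> Q -> bool) : all (fun x => all (p x) enumQ) enumQ -> forall x y, p x y.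
Proof. by move=> H x y; apply: (allQ1 (p := p x)); apply: (allQ1 H). Qed.
Lemma allQ3 (p : Q -> Q -> Q -> bool) :
  all (fun x => all (fun y => all (p x y) enumQ) enumQ) enumQ -> forall x y z, p x y z.
Proof. by move=> H x y z; apply: (allQ1 (p := p x y)); apply: (allQ2 H). Qed.

Definition qz : Q := ((false, false, false), true).
Definition qC (c : Q) : bool := (c == qone) || (c == qz).

Lemma Qloop_E : in_E Qloop.
Proof.
apply: (E_crit (C := fun c : Qloop => qC c)).
- move=> x y z; apply/eqP; move: x y z; apply: allQ3; by vm_compute.
- by move=> x; apply/eqP; move: x; apply: allQ1; vm_compute.
- move=> c; rewrite /qC; case/orP => /eqP -> ; (split; [|split]);
   try (move=> y; apply/eqP; move: y; apply: allQ1; by vm_compute);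
   try (move=> y z; apply/eqP; move: y z; apply: allQ2; by vm_compute);
   by vm_compute.
- by move=> x; move: x; apply: allQ1; vm_compute.
- by move=> x y; move: x y; apply: allQ2; vm_compute.
- by move=> x y z; move: x y z; apply: allQ3; vm_compute.
Qed.



Section Main.
Variables (n : nat) (F : loop) (g : 'I_n -> F).
Hypothesis HF : free_E_loop g.
Let HE : in_E F := HF.1.
Local Notation "x * y" := (@lmul F x y).

Definition G (i : nat) : F := if insub i is Some o then g o else lone.
Lemma G_g (o : 'I_n) : G o = g o. Proof. by rewrite /G valK. Qed.
Lemma G_out i : n <= i -> G i = lone.
Proof. by move=> H; rewrite /G insubF // ltnNge H. Qed.

Definition code := (nat * nat * nat * nat)%type.
Definition valid (c : code) : bool :=
  let: (t, i, j, k) := c in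
  if t == 0 then (i < n) && (j == 0) && (k == 0)
  else if t == 1 then (i < j) && (j < n) && (k == 0)
  else (t == 2) && (i < j) && (j < k) && (k < n).
Definition bval (c : code) : F :=
  let: (t, i, j, k) := c in
  if t == 0 then lsq (G i) else if t == 1 then lcomm (G i) (G j)
  else lassoc (G i) (G j) (G k).
Fixpoint prodB (l : seq code) : F := if l is c :: l' then bval c * prodB l' else lone.
Definition Span (d : F) := exists l, all valid l /\ d = prodB l.

Lemma cn_bval c : cn (bval c).
Proof.
case: c => [[[t i] j] k] /=.
case: ifP => _; first exact: cn_sq.
case: ifP => _; [exact: cn_comm | exact: cn_assoc].
Qed.
Lemma cn_prodB l : cn (prodB l).
Proof. elim: l => [|c l IH] /=; [exact: cn1 | exact (cn_mul HE (cn_bval c) IH)]. Qed.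
Lemma prodB_cat l1 l2 : prodB (l1 ++ l2) = prodB l1 * prodB l2.
Proof.
elim: l1 => [|c l IH] /=; first by rewrite lmul1l.
by rewrite IH (cnL (cn_bval c)).
Qed.
Lemma Span_cn d : Span d -> cn d.
Proof. by case=> l [_ ->]; exact: cn_prodB. Qed.
Lemma Span1 : Span lone. Proof. by exists [::]. Qed.
Lemma Span_mul a b : Span a -> Span b -> Span (a * b).
Proof.
case=> l1 [V1 ->] [l2 [V2 ->]]; exists (l1 ++ l2); split; last by rewrite prodB_cat.
by rewrite all_cat V1 V2.
Qed.
Lemma Span_code c : valid c -> Span (bval c).
Proof. by move=> V; exists [:: c]; rewrite /= V lmul1r. Qed.

Lemma Span_sqG i : Span (lsq (G i)).
Proof.
case: (ltnP i n) => H; last by rewrite G_out // (s1 F); exact: Span1.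
by apply: (Span_code (c := (0, i, 0, 0))); rewrite /= H.
Qed.

Lemma Span_commG i j : Span (lcomm (G i) (G j)).
Proof.
case: (ltnP i n) => Hi; last by rewrite (G_out Hi) c1l; exact: Span1.
case: (ltnP j n) => Hj; last by rewrite (G_out Hj) c1r; exact: Span1.
case: (ltngtP i j) => Hij.
- by apply: (Span_code (c := (1, i, j, 0))); rewrite /= Hij Hj.
- rewrite (c_sym HE); by apply: (Span_code (c := (1, j, i, 0))); rewrite /= Hij Hi.
- by rewrite Hij (c_self (G j)); exact: Span1.
Qed.

Lemma Span_assocG i j k : Span (lassoc (G i) (G j) (G k)).
Proof.
case: (ltnP i n) => Hi; last by rewrite (G_out Hi) a1l; exact: Span1.
case: (ltnP j n) => Hj; last by rewrite (G_out Hj) a1m; exact: Span1.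
case: (ltnP k n) => Hk; last by rewrite (G_out Hk) a1r; exact: Span1.
case: (ltngtP i j) => Hij; last by rewrite Hij (aLA HE); exact: Span1.
- case: (ltngtP j k) => Hjk; last by rewrite Hjk (aRA HE); exact: Span1.
  + by apply: (Span_code (c := (2, i, j, k))); rewrite /= Hij Hjk Hk.
  + case: (ltngtP i k) => Hik; last by rewrite Hik (aFL HE); exact: Span1.
    * rewrite (aS23 HE); apply: (Span_code (c := (2, i, k, j))); by rewrite /= Hik Hjk Hj.
    * rewrite (aS23 HE) -(aS12 HE); apply: (Span_code (c := (2, k, i, j))); by rewrite /= Hik Hij Hj.
- case: (ltngtP j k) => Hjk; last by rewrite Hjk (aRA HE); exact: Span1.
  + case: (ltngtP i k) => Hik; last by rewrite Hik (aFL HE); exact: Span1.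
    * rewrite -(aS12 HE); apply: (Span_code (c := (2, j, i, k))); by rewrite /= Hij Hik Hk.
    * rewrite -(aS12 HE) (aS23 HE); apply: (Span_code (c := (2, j, k, i))); by rewrite /= Hjk Hik Hi.
  + rewrite -(aS12 HE) (aS23 HE) -(aS12 HE); apply: (Span_code (c := (2, k, j, i))).
    by rewrite /= Hjk Hij Hi.
Qed.

Lemma span_ext (phi : F -> F) :
  (forall x, cn (phi x)) -> Span (phi lone) -> (forall i, Span (phi (g i))) ->
  (forall x y, exists d, Span d /\ phi (x * y) = (phi x * phi y) * d) ->
  forall x, Span (phi x).
Proof.
move=> Hcn H1 Hg Hm; apply: (gen_ind HF) => //.
- move=> x y Hx Hy; have [d [Hd ->]] := Hm x y.
  by apply: Span_mul => //; exact: Span_mul.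
- move=> x y Hx Hy; have [d [Hd e]] := Hm x (lldiv x y).
  rewrite lmul_ldiv in e.
  have Hd' := Span_cn Hd; have Hx' := Hcn x; have Hu := Hcn (lldiv x y); have Hy' := Hcn y.
  have -> : phi (lldiv x y) = (phi x * phi y) * d by rewrite e; cgroup.
  by apply: Span_mul => //; exact: Span_mul.
- move=> x y Hx Hy; have [d [Hd e]] := Hm (lrdiv x y) y.
  rewrite lmul_rdiv in e.
  have Hd' := Span_cn Hd; have Hx' := Hcn x; have Hu := Hcn (lrdiv x y); have Hy' := Hcn y.
  have -> : phi (lrdiv x y) = (phi x * phi y) * d by rewrite e; cgroup.
  by apply: Span_mul => //; exact: Span_mul.
Qed.

Lemma SpanA1 j k x : Span (lassoc x (G j) (G k)).
Proof.
move: x; apply: (span_ext (phi := fun x => lassoc x (G j) (G k))).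
- by move=> x; exact: cn_assoc.
- by rewrite a1l; exact: Span1.
- by move=> i; rewrite -G_g; exact: Span_assocG.
- by move=> x y; exists lone; split; [exact: Span1 | rewrite lmul1r (aL1 HE)].
Qed.
Lemma SpanA2 x k y : Span (lassoc x y (G k)).
Proof.
move: y; apply: (span_ext (phi := fun y => lassoc x y (G k))).
- by move=> y; exact: cn_assoc.
- by rewrite a1m; exact: Span1.
- by move=> i; rewrite -G_g; exact: SpanA1.
- by move=> y z; exists lone; split; [exact: Span1 | rewrite lmul1r (aL2 HE)].
Qed.
Lemma SpanA x y z : Span (lassoc x y z).
Proof.
move: z; apply: (span_ext (phi := fun z => lassoc x y z)).
- by move=> z; exact: cn_assoc.
- by rewrite a1r; exact: Span1.
- by move=> i; rewrite -G_g; exact: SpanA2.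
- by move=> z w; exists lone; split; [exact: Span1 | rewrite lmul1r (aL3 HE)].
Qed.
Lemma SpanC1 j x : Span (lcomm x (G j)).
Proof.
move: x; apply: (span_ext (phi := fun x => lcomm x (G j))).
- by move=> x; exact: cn_comm.
- by rewrite c1l; exact: Span1.
- by move=> i; rewrite -G_g; exact: Span_commG.
- move=> x y; eexists; split; last exact: (cid HE).
  by repeat apply: Span_mul; exact: SpanA.
Qed.
Lemma SpanC x y : Span (lcomm x y).
Proof.
move: y; apply: (span_ext (phi := fun y => lcomm x y)).
- by move=> y; exact: cn_comm.
- by rewrite c1r; exact: Span1.
- by move=> i; rewrite -G_g; exact: SpanC1.
- move=> y z; eexists; split; last by rewrite (c_sym HE) (cid HE) (c_sym HE y) (c_sym HE z).
  by repeat apply: Span_mul; exact: SpanA.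
Qed.
Lemma SpanS x : Span (lsq x).
Proof.
move: x; apply: (span_ext (phi := fun x => lsq x)).
- by move=> x; exact: cn_sq.
- by rewrite s1; exact: Span1.
- by move=> i; rewrite -G_g; exact: Span_sqG.
- move=> x y; eexists; split; last exact: (sid HE).
  apply: Span_mul; first exact: SpanC.
  by repeat apply: Span_mul; exact: SpanA.
Qed.


Definition rel (x y : F) := exists d, Span d /\ x = y * d.
Lemma rel_refl x : rel x x.
Proof. by exists lone; split; [exact: Span1 | rewrite lmul1r]. Qed.
Lemma rel_sym x y : rel x y -> rel y x.
Proof. by case=> d [Hd ->]; exists d; split=> //; rewrite (cnKr HE (Span_cn Hd)). Qed.
Lemma rel_trans x y z : rel x y -> rel y z -> rel x z.
Proof.
case=> c [Hc ->] [d [Hd ->]]; exists (d * c); split; first exact: Span_mul.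
by rewrite (cnR HE (Span_cn Hc)).
Qed.
Lemma rel_mul x x' y y' : rel x x' -> rel y y' -> rel (x * y) (x' * y').
Proof.
case=> c [Hc ->] [d [Hd ->]]; exists (c * d); split; first exact: Span_mul.
by rewrite -(cnR HE (Span_cn Hd)) (cnAc HE (Span_cn Hc)) (cnR HE (Span_cn Hd)).
Qed.
Lemma rel_comm x y : rel (x * y) (y * x).
Proof. exists (lcomm x y); split; [exact: SpanC | exact: commE]. Qed.
Lemma rel_assoc x y z : rel ((x * y) * z) (x * (y * z)).
Proof. exists (lassoc x y z); split; [exact: SpanA | exact: assocE]. Qed.
Lemma rel_sqr x : rel (x * x) lone.
Proof. by exists (x * x); split; [exact: (SpanS x) | rewrite lmul1l]. Qed.

Lemma rel_r1 A B x : rel ((A * x) * (B * x)) (A * B).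
Proof.
apply: (rel_trans (rel_assoc _ _ _)).
apply: (rel_trans (rel_mul (rel_refl A) (rel_sym (rel_assoc _ _ _)))).
apply: (rel_trans (rel_mul (rel_refl A) (rel_mul (rel_comm x B) (rel_refl x)))).
apply: (rel_trans (rel_mul (rel_refl A) (rel_assoc _ _ _))).
apply: (rel_trans (rel_mul (rel_refl A) (rel_mul (rel_refl B) (rel_sqr x)))).
rewrite lmul1r; exact: rel_refl.
Qed.
Lemma rel_r2 A B x : rel ((A * B) * x) ((A * x) * B).
Proof.
apply: (rel_trans (rel_assoc _ _ _)).
apply: (rel_trans (rel_mul (rel_refl A) (rel_comm B x))).
exact: rel_sym (rel_assoc _ _ _).
Qed.

Fixpoint mk (b : nat -> bool) (k : nat) : F :=
  if k is k'.+1 then (if b k' then mk b k' * G k' else mk b k') else lone.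

Lemma mk_ext b c k : (forall m, b m = c m) -> mk b k = mk c k.
Proof. by move=> H; elim: k => [|k IH] //=; rewrite H IH. Qed.
Lemma mk_false b k : (forall m, b m = false) -> mk b k = lone.
Proof. by move=> H; elim: k => [|k IH] //=; rewrite H IH. Qed.
Lemma mk_delta i0 k : mk (fun m => m == i0) k = if i0 < k then G i0 else lone.
Proof.
elim: k => [|k IH] //=; rewrite IH.
case: (k =P i0) => [->|H]; first by rewrite ltnn leqnn lmul1l.
rewrite [i0 < k.+1]ltnS [i0 <= k]leq_eqVlt; case: (i0 =P k) => [e|_]; [exfalso; exact: H (esym e) | by []].
Qed.
Lemma mk_xor b c k : rel (mk (fun m => b m (+) c m) k) (mk b k * mk c k).
Proof.
elim: k => [|k IH] /=; first by rewrite lmul1l; exact: rel_refl.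
case: (b k); case: (c k) => /=.
- exact: (rel_trans IH (rel_sym (rel_r1 _ _ _))).
- exact: (rel_trans (rel_mul IH (rel_refl _)) (rel_r2 _ _ _)).
- exact: (rel_trans (rel_mul IH (rel_refl _)) (rel_assoc _ _ _)).
- exact: IH.
Qed.

Section Bits.
Variable Pi : F -> power_loop Z2 'I_n.
Hypothesis HPi : loop_hom Pi.
Hypothesis HPg : forall i, Pi (g i) = (fun j => i == j).
Definition bits (x : F) (m : nat) : bool := if insub m is Some o then Pi x o else false.

Lemma bits_mul x y m : bits (x * y) m = bits x m (+) bits y m.
Proof. by rewrite /bits HPi; case: insubP => [o _ _|_]. Qed.
Lemma bits_ldiv x y m : bits (lldiv x y) m = bits x m (+) bits y m.
Proof. by rewrite /bits (hom_ldiv HPi); case: insubP => [o _ _|_]. Qed.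
Lemma bits_rdiv x y m : bits (lrdiv x y) m = bits x m (+) bits y m.
Proof. by rewrite /bits (hom_rdiv HPi); case: insubP => [o _ _|_]. Qed.
Lemma bits1 m : bits lone m = false.
Proof. by rewrite /bits (hom1 HPi); case: insubP => [o _ _|_]. Qed.
Lemma bits_g i m : bits (g i) m = (m == val i).
Proof.
rewrite /bits HPg; case: insubP => [o _ <-|H] /=; first by rewrite eq_sym.
by apply/esym/eqP => e; move: H; rewrite e ltn_ord.
Qed.

Lemma mk_rep x : rel x (mk (bits x) n).
Proof.
move: x; apply: (gen_ind HF).
- by rewrite (mk_false _ bits1); exact: rel_refl.
- by move=> i; rewrite (mk_ext _ (bits_g i)) mk_delta ltn_ord G_g; exact: rel_refl.
- move=> x y Hx Hy; rewrite (mk_ext _ (bits_mul x y)).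
  exact: rel_trans (rel_mul Hx Hy) (rel_sym (mk_xor _ _ _)).
- move=> x y Hx Hy; rewrite (mk_ext _ (bits_ldiv x y)).
  apply: rel_trans (rel_trans _ (rel_mul Hx Hy)) (rel_sym (mk_xor _ _ _)).
  apply: rel_sym; rewrite -{1}(lmul_ldiv x y).
  apply: (rel_trans (rel_sym (rel_assoc _ _ _))).
  apply: (rel_trans (rel_mul (rel_sqr x) (rel_refl _))).
  rewrite lmul1l; exact: rel_refl.
- move=> x y Hx Hy; rewrite (mk_ext _ (bits_rdiv x y)).
  apply: rel_trans (rel_trans _ (rel_mul Hx Hy)) (rel_sym (mk_xor _ _ _)).
  apply: rel_sym; rewrite -{1}(lmul_rdiv y x).
  apply: (rel_trans (rel_assoc _ _ _)).
  apply: (rel_trans (rel_mul (rel_refl _) (rel_sqr y))).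
  rewrite lmul1r; exact: rel_refl.
Qed.

Lemma ker_span x : (forall o, Pi x o = false) -> Span x.
Proof.
move=> H; have := mk_rep x.
rewrite (mk_false _ (b := bits x)); last by move=> m; rewrite /bits; case: insubP => [o _ _|]; rewrite ?H.
by case=> d [Hd ->]; rewrite lmul1l.
Qed.
End Bits.

End Main.



Definition asg (i j k : nat) (a0 a1 a2 : Qloop) (m : nat) : Qloop :=
  if m == i then a0 else if m == j then a1 else if m == k then a2 else qone.
Definition bvalQ (f : nat -> Qloop) (c : code) : Qloop :=
  let: (t, i, j, k) := c in
  if t == 0 then lsq (f i) else if t == 1 then lcomm (f i) (f j)
  else lassoc (f i) (f j) (f k).
Fixpoint prodQ (f : nat -> Qloop) (l : seq code) : Qloop :=
  if l is c :: l' then qmul (bvalQ f c) (prodQ f l') else qone.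

Lemma prodQ_count f l c :
  (forall c', c' \in l -> c' != c -> bvalQ f c' = qone) -> bvalQ f c = qz ->
  prodQ f l = if odd (count_mem c l) then qz else qone.
Proof.
move=> H Hc; elim: l H => [|d l IH] H //=.
rewrite IH; last by move=> c' cl; apply: H; rewrite inE cl orbT.
case: (d =P c) => [->|ne].
  by rewrite Hc add1n /=; case: (odd _); vm_compute.
rewrite H ?inE ?eqxx //; last exact/eqP.
by rewrite add0n q_1l.
Qed.

Definition qe0 : Q := ((true, false, false), false).
Definition qe1 : Q := ((false, true, false), false).
Definition qe2 : Q := ((false, false, true), false).
Definition qp0 : Q := ((true, true, false), false).
Definition qr : Q := ((true, true, true), false).

Section Sep.
Variables (n : nat) (F : loop) (g : 'I_n -> F).
Hypothesis HF : free_E_loop g.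
Variables (M3 : loop) (g3 : 'I_3 -> M3).
Hypothesis HM : free_E_loop g3.
Let HE : in_E F := HF.1.
Local Notation "x * y" := (@lmul F x y).

Lemma kappa_prod (kap : F -> Qloop) (f : nat -> Qloop) :
  loop_hom kap -> (forall m, kap (G g m) = f m) -> forall l, kap (prodB g l) = prodQ f l.
Proof.
move=> Hk Hf; elim=> [|c l IH] /=; first exact: (hom1 Hk).
rewrite Hk IH; congr qmul.
case: c => [[[t i] j] k] /=.
case: ifP => _; first by rewrite (hom_sq Hk) Hf.
case: ifP => _; first by rewrite (hom_comm Hk) !Hf.
by rewrite (hom_assoc Hk) !Hf.
Qed.

Lemma build l (i j k : nat) (a0 a1 a2 : Qloop) : i < n -> j < n -> k < n ->
  (forall psi : F -> M3, loop_hom psi -> psi (prodB g l) = lone) ->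
  prodQ (asg i j k a0 a1 a2) l = qone.
Proof.
move=> Hi Hj Hk Hall.
pose t0 : 'I_3 := @Ordinal 3 0 isT. pose t1 : 'I_3 := @Ordinal 3 1 isT. pose t2 : 'I_3 := @Ordinal 3 2 isT.
have [psi [Hpsi [Hpsig _]]] := HF.2 M3 HM.1
   (fun o => if val o == i then g3 t0 else if val o == j then g3 t1
             else if val o == k then g3 t2 else lone).
have [th [Hth [Hthg _]]] := HM.2 Qloop Qloop_E
   (fun t : 'I_3 => if val t == 0 then a0 else if val t == 1 then a1 else a2).
have Hk' := hom_comp Hpsi Hth.
have Hf : forall m, th (psi (G g m)) = asg i j k a0 a1 a2 m.
  move=> m; case: (ltnP m n) => Hm.
    have -> : m = val (Ordinal Hm) by [].
    rewrite G_g Hpsig /asg /=.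
    case: (m == i); first by rewrite Hthg.
    case: (m == j); first by rewrite Hthg.
    case: (m == k); first by rewrite Hthg.
    exact: (hom1 Hth).
  rewrite (G_out g Hm) (hom1 Hpsi) (hom1 Hth) /asg.
  have -> : (m == i) = false by apply/eqP; lia.
  have -> : (m == j) = false by apply/eqP; lia.
  by have -> : (m == k) = false by apply/eqP; lia.
rewrite -(kappa_prod Hk' Hf) (Hall psi Hpsi); exact: (hom1 Hth).
Qed.

Lemma prodB_rem l c : c \in l -> prodB g l = bval g c * prodB g (rem c l).
Proof.
elim: l => [|d l IH] //=; rewrite inE.
case: (c =P d) => [<-|ne] /= cl; first by rewrite eqxx.
have -> : (d == c) = false by apply/eqP => e; apply: ne.
rewrite IH //=.
have H1 := cn_bval HF c; have H2 := cn_bval HF d; have H3 := cn_prodB HF (rem c l).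
cgroup.
Qed.

Lemma even_prod l : (forall y, ~~ odd (count_mem y l)) -> prodB g l = lone.
Proof.
move: {2}(size l) (leqnn (size l)) => N; elim: N l => [|N IH] [|c l] //= Hs Hy.
have Hc := Hy c; rewrite /= eqxx add1n /= negbK in Hc.
have cin : c \in l by rewrite -has_pred1 has_count; case: (count _ l) Hc.
rewrite (prodB_rem cin) -(cnL (cn_bval HF c)) (cnK (cn_bval HF c)) lmul1l.
apply: IH; first by rewrite size_rem //; move: Hs; rewrite ltnS; case: (size l) => //= s; lia.
move=> y; rewrite count_mem_rem; have := Hy y; rewrite /=.
case: (c =P y) => [<-|_] /=; last by rewrite add0n subn0.
by rewrite add0n negbK; case: (count_mem c l) => //= m; rewrite subn1.
Qed.

Ltac crush Hne := repeat (case: eqP => ?); subst;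
  try (by exfalso; move: Hne; rewrite eqxx);
  try (by vm_compute); try (by exfalso; lia); try done.

Lemma sepSq l i : valid n (0, i, 0, 0) -> all (valid n) l ->
  prodQ (asg i i i qr qone qone) l = if odd (count_mem (0, i, 0, 0) l) then qz else qone.
Proof.
move=> Vc Vl; apply: prodQ_count; last by rewrite /= /asg eqxx; vm_compute.
move=> [[[t a] b] d] cl Hne; have := allP Vl _ cl; clear cl; rewrite /valid /bvalQ /asg.
case: t Hne => [|[|[|t]]] Hne //=.
- move=> /andP [/andP [_ /eqP Hb] /eqP Hd]; subst b d; crush Hne.
- move=> /andP [/andP [ab _] _]; crush Hne.
- move=> /andP [/andP [ab bd] _]; crush Hne.
Qed.


Lemma sepCm l i j : valid n (1, i, j, 0) -> all (valid n) l ->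
  prodQ (asg i j i qp0 qe2 qone) l = if odd (count_mem (1, i, j, 0) l) then qz else qone.
Proof.
move=> Vc Vl; move: (Vc) => /= /andP [/andP [ij jn] _].
apply: prodQ_count; last first.
  rewrite /= /asg eqxx; have -> : (j == i) = false by apply/eqP; lia.
  by rewrite eqxx; vm_compute.
move=> [[[t a] b] d] cl Hne; have := allP Vl _ cl; clear cl; rewrite /valid /bvalQ /asg.
case: t Hne => [|[|[|t]]] Hne //=.
- move=> /andP [/andP [_ /eqP Hb] /eqP Hd]; subst b d; crush Hne.
- move=> /andP [/andP [ab _] /eqP Hd]; subst d; crush Hne.
- move=> /andP [/andP [ab bd] _]; crush Hne.
Qed.

Lemma sepAs l i j k : valid n (2, i, j, k) -> all (valid n) l ->
  prodQ (asg i j k qe0 qe1 qe2) l = if odd (count_mem (2, i, j, k) l) then qz else qone.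
Proof.
move=> Vc Vl; move: (Vc) => /= /andP [/andP [ij jk] kn].
apply: prodQ_count; last first.
  rewrite /= /asg eqxx; have -> : (j == i) = false by apply/eqP; lia.
  have -> : (k == i) = false by apply/eqP; lia.
  have -> : (k == j) = false by apply/eqP; lia.
  by rewrite !eqxx; vm_compute.
move=> [[[t a] b] d] cl Hne; have := allP Vl _ cl; clear cl; rewrite /valid /bvalQ /asg.
case: t Hne => [|[|[|t]]] Hne //=.
- move=> /andP [/andP [_ /eqP Hb] /eqP Hd]; subst b d; crush Hne.
- move=> /andP [/andP [ab _] /eqP Hd]; subst d; crush Hne.
- move=> /andP [/andP [ab bd] _]; crush Hne.
Qed.


Lemma separate x : (forall psi : F -> M3, loop_hom psi -> psi x = lone) -> x = lone.
Proof.
move=> Hall.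
have [Pi [HPi [HPg _]]] := HF.2 (power_loop Z2 'I_n) (power_E 'I_n Z2_E) (fun i j => i == j).
case: (boolP [exists o, Pi x o]) => [/existsP [o Ho]|/existsPn Hno].
  exfalso.
  have [psi [Hpsi [Hpsig _]]] := HF.2 M3 HM.1 (fun j => if j == o then g3 ord0 else lone).
  have [th [Hth [Hthg _]]] := HM.2 Z2 Z2_E (fun t => t == ord0).
  have [h0 [_ [_ U]]] := HF.2 Z2 Z2_E (fun j => j == o).
  have e1 : th (psi x) = h0 x.
    apply: (U (fun y => th (psi y))); first exact: hom_comp.
    move=> j; rewrite Hpsig; case: (j == o); first by rewrite Hthg.
    exact: (hom1 Hth).
  have e2 : Pi x o = h0 x.
    apply: (U (fun y => Pi y o)); first by move=> y z; rewrite HPi.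
    by move=> j; rewrite HPg.
  by move: Ho; rewrite e2 -e1 (Hall psi Hpsi) (hom1 Hth).
have [l [Vl ex]] := ker_span HF HPi HPg (fun o => negbTE (Hno o)).
rewrite ex in Hall *.
case: (boolP (has (fun c => odd (count_mem c l)) l)) => [/hasP [c cl codd]|Hev]; last first.
  apply: even_prod => y; apply/negP => Hy; move/negP: Hev; apply; apply/hasP; exists y => //.
  by rewrite -has_pred1 has_count; case: (count _ l) Hy.
exfalso.
have Vc := allP Vl c cl.
move: c Vc codd {cl} => [[[t i] j] k] Vc codd.
case: t Vc codd => [|[|[|t]]] Vc codd //.
- move: (Vc) => /= /andP [/andP [Hi /eqP Hj] /eqP Hk]; subst j k.
  have := build qr qone qone Hi Hi Hi Hall.
  by rewrite (sepSq Vc Vl) codd.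
- move: (Vc) => /= /andP [/andP [ij jn] /eqP Hk]; subst k.
  have Hi : i < n by lia.
  have := build qp0 qe2 qone Hi jn Hi Hall.
  by rewrite (sepCm Vc Vl) codd.
- move: (Vc) => /= /andP [/andP [ij jk] kn].
  have Hi : i < n by lia. have Hj : j < n by lia.
  have := build qe0 qe1 qe2 Hi Hj kn Hall.
  by rewrite (sepAs Vc Vl) codd.
Qed.

End Sep.

Theorem lemma4p1 (n : nat) (Hn : 3 <= n)
  (F : loop) (g : 'I_n -> F) (HF : free_E_loop g)
  (M3 : loop) (g3 : 'I_3 -> M3) (HM : free_E_loop g3) :
  exists (I : Type) (h : F -> power_loop M3 I),
    loop_hom h /\ injective h.
Proof.
exists {psi : F -> M3 | loop_hom psi}.
exists (fun x => fun p => proj1_sig p x); split.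
  move=> x y; apply: functional_extensionality => p; exact: (proj2_sig p x y).
move=> x y e.
have H : forall psi : F -> M3, loop_hom psi -> psi (lldiv x y) = lone.
  move=> psi Hpsi.
  have exy := congr1 (fun f => f (exist _ psi Hpsi)) e; simpl in exy.
  by rewrite (hom_ldiv Hpsi) exy ldivv.
have e' := separate HF HM H.
by rewrite -(lmul_ldiv x y) e' lmul1r.
Qed.
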